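(* Let $d\ge1$ and $-1\le a<b<1$ with $a+b\ge 0$, and suppose \[ n=\frac{d\left(\left(\frac{a+b-2}{b-a}\right)^2-1\right)}{\left(\frac{a+b-2}{b-a}\right)^2-d} \] is an integer. If there exists a set of $n$ unit vectors in $\mathbb{R}^d$ such that the inner product of any two distinct ones lies in $\{a,b\}$, then there exists an equiangular tight frame consisting of $n$ vectors in $\mathbb{R}^d$.
   Context: An equiangular tight frame of $m$ vectors in $\mathbb{R}^k$ is a family of unit vectors $f_1,\dots,f_m\in\mathbb{R}^k$ such that $|\langle f_i,f_j\rangle|$ takes the same value for all $i\neq j$, and there is a constant $C>0$ with $\sum_{i=1}^m\langle x,f_i\rangle^2=C\|x\|^2$ for all $x\in\mathbb{R}^k$. *)

(* Defs.v *)
From mathcomp Require Import all_boot all_order all_algebra.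
From mathcomp Require Import reals.
Set Implicit Arguments. Unset Strict Implicit. Unset Printing Implicit Defensive.
Import Order.TTheory GRing.Theory Num.Theory.
Local Open Scope ring_scope.

Definition dotv (R : realType) (k : nat) (u v : 'rV[R]_k) : R :=
  \sum_(i < k) u 0 i * v 0 i.

Definition is_ETF (R : realType) (k m : nat) (f : 'I_m -> 'rV[R]_k) : Prop :=
  [/\ (forall i, dotv (f i) (f i) = 1),
      (exists c : R, forall i j, i != j -> `|dotv (f i) (f j)| = c)
    & (exists C : R, 0 < C /\
         forall x : 'rV[R]_k, \sum_(i < m) (dotv x (f i)) ^+ 2 = C * dotv x x)].

(* Main.v *)
Require Import Defs.
From mathcomp Require Import all_boot all_order all_algebra.
From mathcomp Require Import reals.
From mathcomp Require Import ring lra.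
Import Order.TTheory GRing.Theory Num.Theory.
Local Open Scope ring_scope.


Lemma dotvE (R : realType) k (u v : 'rV[R]_k) : dotv u v = (u *m v^T) 0 0.
Proof. by rewrite /dotv !mxE; apply: eq_bigr => i _; rewrite mxE. Qed.

Lemma mxtr11 (R : realType) (A : 'M[R]_1) : \tr A = A 0 0.
Proof. by rewrite /mxtrace big_ord1. Qed.

Lemma fro_sum (R : realType) p q (X : 'M[R]_(p,q)) :
  \tr (X *m X^T) = \sum_i \sum_j X i j ^+ 2.
Proof.
rewrite /mxtrace; apply: eq_bigr => i _; rewrite mxE; apply: eq_bigr => j _.
by rewrite mxE expr2.
Qed.

Lemma fro_ge0 (R : realType) p q (X : 'M[R]_(p,q)) : 0 <= \tr (X *m X^T).
Proof.
by rewrite fro_sum; apply: sumr_ge0 => i _; apply: sumr_ge0 => j _; apply: sqr_ge0.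
Qed.

Lemma fro_eq0 (R : realType) p q (X : 'M[R]_(p,q)) : \tr (X *m X^T) = 0 -> X = 0.
Proof.
rewrite fro_sum => H; apply/matrixP => i j; rewrite mxE.
have Hi := psumr_eq0P (fun i _ => sumr_ge0 _ (fun j (_ : true) => sqr_ge0 (X i j))) H.
have := psumr_eq0P (fun j _ => sqr_ge0 (X i j)) (Hi i isT) (i:=j) isT.
by move/eqP; rewrite sqrf_eq0 => /eqP.
Qed.

Lemma cs_mx (R : realType) k (T : 'M[R]_k) : (0 < k)%N ->
  \tr (T *m T^T) - (\tr T) ^+ 2 / k%:R =
  \tr ((T - (\tr T / k%:R)%:M) *m (T - (\tr T / k%:R)%:M)^T).
Proof.
move=> k0; set c := \tr T / k%:R.
rewrite (raddfB (@trmx R k k)) /= tr_scalar_mx mulmxBl !mulmxBr.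
rewrite mul_mx_scalar mul_scalar_mx mul_mx_scalar.
rewrite !raddfB /= !mxtraceZ mxtrace_tr mxtrace_scalar.
rewrite /c; have kn0 : (k%:R : R) != 0 by rewrite pnatr_eq0 -lt0n.
rewrite -(mulr_natr (\tr T / k%:R) k). field. done.
Qed.

Lemma sum_sq_dev (R : realType) n (x : 'I_n -> R) c :
  \sum_i (x i - c) ^+ 2 = \sum_i x i ^+ 2 - 2 * c * \sum_i x i + n%:R * c ^+ 2.
Proof.
under eq_bigr => i _ do rewrite sqrrB.
rewrite !big_split /= sumrN sumr_const card_ord.
rewrite mulr_sumr; congr (_ - _ + _).
- by apply: eq_bigr => i _; rewrite !mulr2n; ring.
- by rewrite mulr_natl.
Qed.

Lemma dotvC (R : realType) k (u v : 'rV[R]_k) : dotv u v = dotv v u.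
Proof. by rewrite /dotv; apply: eq_bigr => i _; rewrite mulrC. Qed.

Lemma dotv_lin (R : realType) k (y u s : 'rV[R]_k) c mu :
  dotv y (c *: (u - mu *: s)) = c * (dotv y u - mu * dotv y s).
Proof.
rewrite /dotv [mu * _]mulr_sumr -sumrB mulr_sumr; apply: eq_bigr => i _.
by rewrite !mxE; ring.
Qed.

Lemma dotv_expand (R : realType) k (u v s : 'rV[R]_k) c mu :
  dotv (c *: (u - mu *: s)) (c *: (v - mu *: s)) =
  c ^+ 2 * (dotv u v - mu * dotv u s - mu * dotv s v + mu ^+ 2 * dotv s s).
Proof.
rewrite /dotv [mu * \sum_(i < k) u 0 i * s 0 i]mulr_sumr [mu * \sum_(i < k) s 0 i * v 0 i]mulr_sumr [mu ^+ 2 * _]mulr_sumr.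
rewrite -!sumrB -big_split /= mulr_sumr; apply: eq_bigr => i _.
by rewrite !mxE; ring.
Qed.


Theorem mainTheorem11 (R : realType) (d n : nat) (a b : R) :
  (1 <= d)%N -> -1 <= a -> a < b -> b < 1 -> 0 <= a + b ->
  ((a + b - 2) / (b - a)) ^+ 2 - d%:R != 0 ->
  n%:R = d%:R * (((a + b - 2) / (b - a)) ^+ 2 - 1)
         / (((a + b - 2) / (b - a)) ^+ 2 - d%:R) ->
  (exists f : 'I_n -> 'rV[R]_d,
      (forall i, dotv (f i) (f i) = 1) /\
      (forall i j, i != j -> dotv (f i) (f j) = a \/ dotv (f i) (f j) = b)) ->
  exists g : 'I_n -> 'rV[R]_d, is_ETF g.
Proof.
move=> hd ha hab hb hab0 hq hn [f [f1 fab]].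
move: hq hn; set q := (a + b - 2) / (b - a) => hq hn.
pose m := (a + b) / 2.
pose w := (b - a) / 2.
have ba0 : b - a != 0 by rewrite subr_eq0 gt_eqF.
have qw : q * w = m - 1 by rewrite /q /w /m; field.
have m0 : 0 <= m by rewrite /m; lra.
have m1 : m < 1 by rewrite /m; lra.
have w0 : 0 < w by rewrite /w; lra.
have dR : 1 <= d%:R :> R by rewrite ler1n.
have hnq : n%:R * (q^+2 - d%:R) = d%:R * (q^+2 - 1) by rewrite hn; field.
have q21 : 1 < q ^+ 2.
  have e : (q ^+ 2 - 1) * w ^+ 2 = (1 - a) * (1 - b).
    have -> : (q ^+ 2 - 1) * w ^+ 2 = (q * w) ^+ 2 - w ^+ 2 by ring.
    by rewrite qw /m /w; field.
  have : 0 < (q ^+ 2 - 1) * w ^+ 2 by rewrite e; apply: mulr_gt0; lra.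
  rewrite pmulr_lgt0 ?exprn_gt0 //; lra.
have nR : 0 < n%:R :> R.
  case: n hnq {f f1 fab hn} => [|n'] hnq; last by rewrite ltr0n.
  exfalso; move: hnq; rewrite mul0r => /esym/eqP; rewrite mulf_eq0 subr_eq0 => /orP [].
    by rewrite pnatr_eq0 => /eqP hd0; move: hd; rewrite hd0.
  by move/eqP=> e; move: q21; rewrite e ltxx.
pose F : 'M[R]_(n,d) := \matrix_(i,k) f i 0 k.
pose G := F *m F^T.
have GE i j : G i j = dotv (f i) (f j).
  by rewrite /G /dotv mxE; apply: eq_bigr => k _; rewrite !mxE.
have FE i k : F i k = f i 0 k by rewrite mxE.
have hG : G = F *m F^T by [].
clearbody G F.
pose s : 'rV[R]_d := const_mx 1 *m F.
have hs : s = const_mx 1 *m F by [].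
clearbody s.
pose x : 'cV[R]_n := F *m s^T.
have hx : x = F *m s^T by [].
clearbody x.
pose sig := (s *m s^T) 0 0.
pose X2 := (x^T *m x) 0 0.
pose Q := \tr (G *m G^T).
have trG : \tr G = n%:R.
  rewrite /mxtrace; under eq_bigr do rewrite GE f1.
  by rewrite sumr_const card_ord.
have sT : s^T = F^T *m const_mx 1 by rewrite hs trmx_mul trmx_const.
have sigE : sig = \sum_i \sum_j G i j.
  rewrite /sig sT hs (mulmxA (const_mx 1 *m F)) -(mulmxA (const_mx 1) F F^T) -hG mxE.
  rewrite [RHS]exchange_big /=; apply: eq_bigr => j _; rewrite !mxE mulr1.
  by apply: eq_bigr => i _; rewrite mxE mul1r.
have sumx : \sum_i x i 0 = sig.
  have e : s *m s^T = const_mx 1 *m x by rewrite hx {1}hs (mulmxA (const_mx 1) F).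
  rewrite /sig e mxE; apply: eq_bigr => i _.
  by rewrite [const_mx 1 0 i]mxE mul1r.
have X2E : X2 = \sum_i x i 0 ^+ 2.
  by rewrite /X2 mxE; apply: eq_bigr => i _; rewrite mxE expr2.
have QE : Q = \sum_i \sum_j G i j ^+ 2 by rewrite /Q fro_sum.
have hypQ : d%:R * (Q - 2 * m * sig + n%:R * (n%:R * m ^+ 2)) = (1 - m) ^+ 2 * n%:R ^+ 2.
  have e1 : \sum_i \sum_j (G i j - m) ^+ 2 = Q - 2 * m * sig + n%:R * (n%:R * m ^+ 2).
    under eq_bigr do rewrite sum_sq_dev.
    rewrite !big_split /= sumrN sumr_const card_ord -QE -mulr_sumr -sigE.
    by rewrite -[in LHS]mulr_natl; ring.
  have e2 : \sum_i \sum_j (G i j - m) ^+ 2 = n%:R * ((1 - m) ^+ 2 + (n%:R - 1) * w ^+ 2).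
    suff e2' : forall i, \sum_j (G i j - m) ^+ 2 = (1 - m) ^+ 2 + (n%:R - 1) * w ^+ 2.
      by rewrite (eq_bigr _ (fun i _ => e2' i)) sumr_const card_ord mulr_natl.
    move=> i.
    rewrite (bigD1 i) //= GE f1; congr (_ + _).
    transitivity (\sum_(j | j != i) w ^+ 2).
      apply: eq_bigr => j hj; rewrite GE.
      have hij : i != j by rewrite eq_sym.
      by case: (fab i j hij) => ->; rewrite /m /w; field.
    by rewrite sumr_const cardC1 card_ord -[w ^+ 2 *+ _]mulr_natl -subn1 natrB // -(ltr0n R).
  rewrite -e1 e2.
  have e3 : (1 - m) ^+ 2 = q ^+ 2 * w ^+ 2.
    by rewrite -exprMn qw; ring.
  rewrite e3.
  have -> : d%:R * (n%:R * (q ^+ 2 * w ^+ 2 + (n%:R - 1) * w ^+ 2)) =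
     q ^+ 2 * w ^+ 2 * n%:R ^+ 2 + n%:R * w ^+ 2 * (d%:R * (q^+2 - 1) - n%:R * (q^+2 - d%:R)) by ring.
  by rewrite hnq subrr mulr0 addr0.
have n0 : (0 < n)%N by rewrite -(ltr0n R).
have sig0 : 0 <= sig by rewrite /sig -mxtr11 fro_ge0.
pose T (be : R) : 'M[R]_d := F^T *m F - be *: (s^T *m s).
have trss : \tr (s^T *m s) = sig by rewrite mxtrace_mulC mxtr11.
have trT be : \tr (T be) = n%:R - be * sig.
  by rewrite /T raddfB /= mxtraceZ trss mxtrace_mulC -hG trG.
have TT be : (T be)^T = T be.
  by rewrite /T raddfB /= linearZ /= trmx_mul trmxK [X in _ *: X]trmx_mul trmxK.
have xT : x^T = s *m F^T by rewrite hx trmx_mul trmxK.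
have e11 (A B : 'M[R]_1) : (A *m B) 0 0 = A 0 0 * B 0 0 by rewrite mxE big_ord1.
have ss1 : s *m s^T = sig%:M by rewrite /sig {1}[s *m s^T]mx11_scalar.
have froT be : \tr (T be *m (T be)^T) = Q - 2 * be * X2 + be ^+ 2 * sig ^+ 2.
  rewrite TT /T mulmxBl !mulmxBr -!scalemxAl -!scalemxAr scalerA !raddfB /= !mxtraceZ.
  have h1 : \tr (F^T *m F *m (F^T *m F)) = Q.
    rewrite /Q hG trmx_mul trmxK mxtrace_mulC !mulmxA.
    by rewrite -(mulmxA (F *m F^T)) mxtrace_mulC !mulmxA.
  have h2 : \tr (F^T *m F *m (s^T *m s)) = X2.
    rewrite /X2 -mxtr11 xT (mulmxA (F^T *m F)) mxtrace_mulC.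
    by rewrite hx !mulmxA.
  have h3 : \tr (s^T *m s *m (F^T *m F)) = X2 by rewrite mxtrace_mulC h2.
  have h4 : \tr (s^T *m s *m (s^T *m s)) = sig ^+ 2.
    rewrite !mulmxA -(mulmxA s^T s s^T) ss1 mul_mx_scalar -scalemxAl mxtraceZ trss.
    by rewrite expr2.
  rewrite h1 h2 h3 h4; ring.
have dn0 : d%:R != 0 :> R by rewrite pnatr_eq0 -lt0n.
have dp : 0 < d%:R :> R by rewrite ltr0n.
have csT be : 0 <= d%:R * \tr (T be *m (T be)^T) - (\tr (T be)) ^+ 2 /\
   (d%:R * \tr (T be *m (T be)^T) - (\tr (T be)) ^+ 2 = 0 -> T be = (\tr (T be) / d%:R)%:M).
  have h := @cs_mx R d (T be) hd.
  have e : d%:R * \tr (T be *m (T be)^T) - (\tr (T be)) ^+ 2 =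
     d%:R * (\tr (T be *m (T be)^T) - (\tr (T be)) ^+ 2 / d%:R) by field.
  rewrite e h; split; first by rewrite mulr_ge0 ?ler0n ?fro_ge0.
  move/eqP; rewrite mulf_eq0 (negbTE dn0) /= => /eqP/fro_eq0/eqP.
  by rewrite subr_eq0 => /eqP.
have csx : 0 <= n%:R * X2 - sig ^+ 2 /\ (n%:R * X2 - sig ^+ 2 = 0 -> forall i, x i 0 = sig / n%:R).
  have nn0 : n%:R != 0 :> R by rewrite gt_eqF.
  have e : n%:R * X2 - sig ^+ 2 = n%:R * \sum_i (x i 0 - sig / n%:R) ^+ 2.
    by rewrite sum_sq_dev -X2E sumx; field.
  rewrite e; split; first by rewrite mulr_ge0 ?ler0n //; apply: sumr_ge0 => i _; apply: sqr_ge0.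
  move/eqP; rewrite mulf_eq0 (negbTE nn0) /= => /eqP H i.
  have := psumr_eq0P (fun i _ => sqr_ge0 (x i 0 - sig / n%:R)) H (i:=i) isT.
  by move/eqP; rewrite sqrf_eq0 subr_eq0 => /eqP.
have key : exists be, [/\ be * sig = n%:R * m, n%:R * be <= 1,
    T be = (n%:R * (1 - m) / d%:R)%:M & (be = 0 \/ forall i, x i 0 = sig / n%:R)].
  case: (eqVneq m 0) => [m00|mn0].
    exists 0; split; [by rewrite m00 !mul0r mulr0 | by rewrite mulr0 ler01 | | by left].
    have [_ h] := csT 0; rewrite h trT mul0r subr0 ?m00 ?subr0 ?mulr1 //.
    rewrite froT; move: hypQ; rewrite m00; move=> hQ.
    have -> : d%:R * (Q - 2 * 0 * X2 + 0 ^+ 2 * sig ^+ 2) = d%:R * (Q - 2 * 0 * sig + n%:R * (n%:R * 0 ^+ 2)) by ring.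
    by rewrite hQ; ring.
  have mp : 0 < m by rewrite lt_def mn0 m0.
  have sigp : 0 < sig.
    rewrite lt_def sig0 andbT; apply/eqP => s0.
    have := (csT 0).1; rewrite froT trT s0.
    have hQ : d%:R * Q = (1 - m) ^+ 2 * n%:R ^+ 2 - d%:R * (n%:R * (n%:R * m ^+ 2)).
      by rewrite -hypQ s0; ring.
    have -> : d%:R * (Q - 2 * 0 * X2 + 0 ^+ 2 * 0 ^+ 2) - (n%:R - 0 * 0) ^+ 2 = d%:R * Q - n%:R ^+ 2 by ring.
    rewrite hQ.
    have -> : (1 - m) ^+ 2 * n%:R ^+ 2 - d%:R * (n%:R * (n%:R * m ^+ 2)) - n%:R ^+ 2 =
       - (n%:R ^+ 2 * m * (2 - m + d%:R * m)) by ring.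
    rewrite oppr_ge0 => h; have : 0 < n%:R ^+ 2 * m * (2 - m + d%:R * m).
      have h1 : 0 <= d%:R * m by rewrite mulr_ge0 ?ler0n. have h2 : 0 < n%:R ^+ 2 :> R by rewrite exprn_gt0. by apply: mulr_gt0; [apply: mulr_gt0|]; lra.
    by rewrite ltNge h.
  have sn0 : sig != 0 by rewrite gt_eqF.
  pose be := n%:R * m / sig.
  have besig : be * sig = n%:R * m by rewrite /be; field.
  have hQ : d%:R * Q = (1 - m) ^+ 2 * n%:R ^+ 2 + 2 * d%:R * m * sig - d%:R * (n%:R * (n%:R * m ^+ 2)).
    by rewrite -hypQ; ring.
  have E : d%:R * \tr (T be *m (T be)^T) - (\tr (T be)) ^+ 2 = 2 * d%:R * m * (sig ^+ 2 - n%:R * X2) / sig.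
    rewrite froT trT.
    have -> : d%:R * (Q - 2 * be * X2 + be ^+ 2 * sig ^+ 2) = d%:R * Q - 2 * d%:R * be * X2 + d%:R * be ^+ 2 * sig ^+ 2 by ring.
    by rewrite hQ /be; field.
  have [c1 c2] := csT be; have [x1 x2] := csx.
  have p2 : 0 < 2 * d%:R * m :> R by rewrite mulr_gt0 // mulr_gt0.
  have E0 : 2 * d%:R * m * (sig ^+ 2 - n%:R * X2) / sig = 0.
    apply/eqP; rewrite eq_le -{2}E c1 andbT.
    by rewrite pmulr_lle0 ?invr_gt0 // (pmulr_rle0 _ p2) subr_le0 -subr_ge0.
  have nX : n%:R * X2 - sig ^+ 2 = 0.
    have pos : 0 < 2 * d%:R * m / sig by rewrite divr_gt0.
    have : (2 * d%:R * m / sig) * (sig ^+ 2 - n%:R * X2) = 0 by rewrite -E0; ring.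
    by move/eqP; rewrite mulf_eq0 (gt_eqF pos) /= subr_eq0 => /eqP ->; rewrite subrr.
  have Tk : T be = (n%:R * (1 - m) / d%:R)%:M.
    rewrite c2; last by rewrite E E0.
    by rewrite trT besig; congr (_%:M); ring.
  exists be; split => //; last by right; apply: x2.
  have sTsM : s *m T be *m s^T = x^T *m x - be *: (sig%:M *m sig%:M).
    rewrite /T mulmxBr mulmxBl -scalemxAr -scalemxAl xT.
    congr (_ - _ *: _); first by rewrite hx !mulmxA.
    by rewrite !mulmxA ss1 -mulmxA ss1.
  have e1 : \tr (s *m T be *m s^T) = n%:R * (1 - m) / d%:R * sig.
    by rewrite Tk mul_mx_scalar -scalemxAl mxtraceZ mxtrace_mulC trss.
  have e2 : \tr (s *m T be *m s^T) = X2 - be * (sig * sig).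
    by rewrite sTsM raddfB /= mxtraceZ -scalar_mxM mxtrace_scalar mxtr11.
  move: e2; rewrite e1.
  have nn0 : n%:R != 0 :> R by rewrite gt_eqF.
  have hX2 : X2 = sig ^+ 2 / n%:R.
    have -> : sig ^+ 2 = n%:R * X2 by apply/eqP; rewrite eq_sym -subr_eq0 nX.
    by field.
  rewrite hX2 /be => h.
  have hsig : sig = n%:R * n%:R * m + n%:R * n%:R * (1 - m) / d%:R.
    have h' : sig * sig = n%:R * (1 - m) / d%:R * sig * n%:R + n%:R * n%:R * m * sig.
      by rewrite h; field; rewrite sn0 nn0.
    have -> : sig = sig * sig / sig by field.
    by rewrite h'; field; rewrite sn0 dn0.
  rewrite /be mulrA ler_pdivrMr // mul1r hsig.
  have : 0 <= n%:R * n%:R * (1 - m) / d%:R by rewrite divr_ge0 ?mulr_ge0 ?ler0n //; lra.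
  lra.
case: key => be [besig nbe Tk bex].
have nn0 : n%:R != 0 :> R by rewrite gt_eqF.
pose r := Num.sqrt (1 - n%:R * be).
have r2 : r ^+ 2 = 1 - n%:R * be by rewrite sqr_sqrtr // subr_ge0.
pose mu := (1 - r) / n%:R.
have hmu : 2 * mu - n%:R * mu ^+ 2 = be.
  transitivity ((1 - r ^+ 2) / n%:R); first by rewrite /mu; field.
  by rewrite r2; field.
have mux i : mu * x i 0 = mu * (sig / n%:R).
  case: bex => [be0|-> //].
  have -> : mu = 0 by rewrite /mu /r be0 mulr0 subr0 sqrtr1 subrr mul0r.
  by rewrite !mul0r.
have m1n0 : 1 - m != 0 by rewrite gt_eqF // subr_gt0.
pose c := (Num.sqrt (1 - m))^-1.
have c2 : c ^+ 2 = (1 - m)^-1 by rewrite /c exprVn sqr_sqrtr // subr_ge0 ltW.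
have c2p : 0 < c ^+ 2 by rewrite c2 invr_gt0 subr_gt0.
pose g i := c *: (f i - mu *: s).
have dfs i : dotv (f i) s = x i 0.
  by rewrite hx /dotv mxE; apply: eq_bigr => k _; rewrite !mxE FE.
have dss : dotv s s = sig by rewrite dotvE.
have hm : m = (2 * mu - n%:R * mu ^+ 2) * sig / n%:R by rewrite hmu besig; field.
have dgg i j : dotv (g i) (g j) = c ^+ 2 * (dotv (f i) (f j) - m).
  rewrite /g dotv_expand dfs (@dotvC R d s) dfs dss !mux; congr (_ * _).
  by rewrite hm; field.
exists g; split.
- by move=> i; rewrite dgg f1 c2 mulVf.
- exists (c ^+ 2 * w) => i j hij; rewrite dgg normrM ger0_norm ?ltW //; congr (_ * _).
  case: (fab i j hij) => ->.
    have -> : a - m = - w by rewrite /m /w; field.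
    by rewrite normrN ger0_norm // ltW.
  have -> : b - m = w by rewrite /m /w; field.
  by rewrite ger0_norm // ltW.
- exists (c ^+ 2 * (n%:R * (1 - m) / d%:R)); split.
    by rewrite mulr_gt0 // divr_gt0 // mulr_gt0 // subr_gt0.
  move=> y.
  have sumz : \sum_i dotv y (f i) = dotv y s.
    rewrite /dotv exchange_big; apply: eq_bigr => k _ /=.
    by rewrite hs mxE mulr_sumr; apply: eq_bigr => i _; rewrite !mxE FE mul1r.
  have hT : \sum_i dotv y (f i) ^+ 2 - be * dotv y s ^+ 2 = n%:R * (1 - m) / d%:R * dotv y y.
    have e1 : \tr (y *m T be *m y^T) = n%:R * (1 - m) / d%:R * dotv y y.
      by rewrite Tk mul_mx_scalar -scalemxAl mxtraceZ mxtr11 dotvE.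
    rewrite -e1 /T mulmxBr mulmxBl raddfB /= -scalemxAr -scalemxAl mxtraceZ.
    have e2 : \tr (y *m (F^T *m F) *m y^T) = \sum_i dotv y (f i) ^+ 2.
      rewrite mulmxA -(mulmxA _ F) -[F *m y^T]trmxK trmx_mul trmxK fro_sum big_ord1.
      apply: eq_bigr => i0 _; rewrite dotvE !mxE; congr (_ ^+ 2); apply: eq_bigr => k0 _.
      by rewrite !mxE FE.
    have e3 : \tr (y *m (s^T *m s) *m y^T) = dotv y s ^+ 2.
      rewrite mulmxA -(mulmxA _ s) -[s *m y^T]trmxK trmx_mul trmxK fro_sum !big_ord1.
      by rewrite dotvE.
    by rewrite e2 e3.
  under eq_bigr do rewrite /g dotv_lin exprMn.
  rewrite -mulr_sumr sum_sq_dev sumz -[RHS]mulrA -hT; congr (_ * _).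
  rewrite -hmu; ring.
Qed.
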